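(* Let $S$ be a Hausdorff countably compact semitopological semigroup which is an orthogonal sum $S=\sum_{i\in\mathscr I}B^0_{\lambda_i}(S_i)$ of topological Brandt $\lambda_i^0$-extensions of semitopological monoids $S_i$ with zeros. Then for every open neighbourhood $U(0)$ of the zero $0$ of $S$ the set of triples $(i,\alpha_i,\beta_i)$ with $i\in\mathscr I$, $\alpha_i,\beta_i\in\lambda_i$ and $(S_i)_{\alpha_i,\beta_i}\not\subseteq U(0)$ is finite. Moreover, for every $i\in\mathscr I$ the subspace $B^0_{\lambda_i}(S_i)$ of $S$ is countably compact.
   Context: All spaces are Hausdorff; a semitopological semigroup is a Hausdorff space with separately continuous associative operation. For a semigroup $T$ with zero $0_T$ and a cardinal $\lambda\ge1$, $B^0_\lambda(T)=(\lambda\times (T\setminus\{0_T\})\times\lambda)\cup\{0\}$ with $(\alpha,a,\beta)(\gamma,b,\delta)=(\alpha,ab,\delta)$ if $\beta=\gamma$ and $ab\ne0_T$, and $0$ otherwise, $0$ a zero. For $A\subseteq T$, $A_{\alpha,\beta}=\{(\alpha,s,\beta):s\in A\setminus\{0_T\}\}\cup\{0\}$ if $0_T\in A$ and $\{(\alpha,s,\beta):s\in A\}$ otherwise. A topological Brandt $\lambda^0$-extension of a semitopological monoid $T$ with zero is $B^0_\lambda(T)$ with a topology making it a semitopological semigroup such that for some $\alpha\in\lambda$ the map $s\mapsto(\alpha,s,\alpha)$ ($0_T\mapsto0$) is a homeomorphism $T\to T_{\alpha,\alpha}$. The orthogonal sum of semigroups $T_\iota$ with zeros is $\{0\}\cup\bigcup_\iota(T_\iota\setminus\{0_\iota\})$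 with products computed in $T_\iota$ when both factors lie in the same $T_\iota$ and the product is non-zero, and $0$ otherwise. *)

(* Defs.v *)
From Stdlib Require Import List.

Record Topology (X : Type) : Type := {
  open : (X -> Prop) -> Prop;
  open_full : open (fun _ => True);
  open_inter : forall U V, open U -> open V -> open (fun x => U x /\ V x);
  open_union : forall F : (X -> Prop) -> Prop,
      (forall U, F U -> open U) -> open (fun x => exists U, F U /\ U x)
}.
Arguments open {X} t U.

Definition hausdorff {X : Type} (t : Topology X) : Prop :=
  forall x y : X, x <> y ->
    exists U V, open t U /\ open t V /\ U x /\ V y /\ forall z, ~ (U z /\ V z).

Definition continuous {X Y : Type} (tX : Topology X) (tY : Topology Y)
  (f : X -> Y) : Prop :=
  forall V, open tY V -> open tX (fun x => V (f x)).

Definition embedding {X Y : Type} (tX : Topology X) (tY : Topology Y)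
  (f : X -> Y) : Prop :=
  (forall x y, f x = f y -> x = y) /\ continuous tX tY f /\
  forall U, open tX U -> exists V, open tY V /\ forall x, U x <-> V (f x).

Definition countably_compact_subset {X : Type} (t : Topology X)
  (A : X -> Prop) : Prop :=
  forall U : nat -> X -> Prop,
    (forall n, open t (U n)) ->
    (forall x, A x -> exists n, U n x) ->
    exists N, forall x, A x -> exists n, n <= N /\ U n x.

Definition countably_compact {X : Type} (t : Topology X) : Prop :=
  countably_compact_subset t (fun _ => True).

Definition semitopological_semigroup {X : Type} (t : Topology X)
  (mul : X -> X -> X) : Prop :=
  hausdorff t /\
  (forall a b c, mul a (mul b c) = mul (mul a b) c) /\
  (forall a, continuous t t (mul a)) /\
  (forall a, continuous t t (fun x => mul x a)).

Definition semitopological_monoid_with_zero {T : Type} (t : Topology T)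
  (mul : T -> T -> T) (z one : T) : Prop :=
  semitopological_semigroup t mul /\
  (forall x, mul one x = x /\ mul x one = x) /\
  (forall x, mul z x = z /\ mul x z = z).

(* S (with product mulS and element zS) is the orthogonal sum of the Brandt
   extensions B^0_{Λ i}(T i): e i α s β is the element (α,s,β) of the i-th
   summand, and e i α 0_i β is the zero of S. *)
Definition is_orthogonal_sum_of_brandt {S I : Type} (Λ T : I -> Type)
  (mulT : forall i, T i -> T i -> T i) (zT : forall i, T i)
  (mulS : S -> S -> S) (zS : S)
  (e : forall i, Λ i -> T i -> Λ i -> S) : Prop :=
  (forall x, mulS zS x = zS /\ mulS x zS = zS) /\
  (forall i a b, e i a (zT i) b = zS) /\
  (forall i a s b, s <> zT i -> e i a s b <> zS) /\
  (forall i j a s b a' s' b', s <> zT i -> s' <> zT j ->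
     e i a s b = e j a' s' b' ->
     existT (fun k => (Λ k * T k * Λ k)%type) i (a, s, b)
     = existT (fun k => (Λ k * T k * Λ k)%type) j (a', s', b')) /\
  (forall x, x = zS \/ exists i a s b, x = e i a s b) /\
  (forall i a s b c t d, b = c ->
     mulS (e i a s b) (e i c t d) = e i a (mulT i s t) d) /\
  (forall i a s b c t d, b <> c -> mulS (e i a s b) (e i c t d) = zS) /\
  (forall i j a s b c t d, i <> j -> mulS (e i a s b) (e j c t d) = zS).

Definition brandt_part {S I : Type} {Λ T : I -> Type} (zS : S)
  (e : forall i, Λ i -> T i -> Λ i -> S) (i : I) : S -> Prop :=
  fun x => x = zS \/ exists a s b, x = e i a s b.

(* Main.v *)
Require Import Defs.
From Stdlib Require Import List.
From Stdlib Require Import Classical ClassicalEpsilon Lia Arith.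

Theorem proposition2p4 (S : Type) (tS : Topology S) (mulS : S -> S -> S)
  (zS : S) (I : Type) (Λ T : I -> Type) (tT : forall i, Topology (T i))
  (mulT : forall i, T i -> T i -> T i) (zT oneT : forall i, T i)
  (e : forall i, Λ i -> T i -> Λ i -> S) :
  semitopological_semigroup tS mulS ->
  countably_compact tS ->
  (forall i, semitopological_monoid_with_zero (tT i) (mulT i) (zT i) (oneT i)) ->
  is_orthogonal_sum_of_brandt Λ T mulT zT mulS zS e ->
  (forall i, exists α : Λ i, embedding (tT i) tS (fun s => e i α s α)) ->
  (forall U : S -> Prop, open tS U -> U zS ->
     exists l : list {i : I & (Λ i * Λ i)%type},
       forall i (a b : Λ i), (exists s : T i, ~ U (e i a s b)) ->
         In (existT (fun k => (Λ k * Λ k)%type) i (a, b)) l) /\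
  (forall i, countably_compact_subset tS (brandt_part zS e i)).
Proof.
  intros Hsg Hcc Hmon Horth _.
  destruct Hsg as (Hhaus & Hassoc & Hlc & Hrc).
  destruct Horth as (Hz & He0 & Hne & Hinj & Hdec & Hmul & Hmul0 & Hmulij).
  assert (Hkey : forall j c d i a s b,
    mulS (mulS (e j c (oneT j) c) (e i a s b)) (e j d (oneT j) d) <> zS ->
    existT (fun k => (Λ k * Λ k)%type) i (a,b) = existT _ j (c,d)).
  { intros j c d i a s b H. destruct (classic (i = j)) as [<-|Hij].
    - destruct (classic (c = a)) as [<-|Hca].
      + rewrite Hmul in H by reflexivity.
        destruct (classic (b = d)) as [<-|Hbd]; [reflexivity|].
        rewrite Hmul0 in H by assumption. congruence.
      + rewrite Hmul0 in H by assumption. rewrite (proj1 (Hz _)) in H. congruence.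
    - rewrite Hmulij in H by (intro Heq; apply Hij; symmetry; exact Heq).
      rewrite (proj1 (Hz _)) in H. congruence. }
  assert (Hsand : forall j c t d,
    mulS (mulS (e j c (oneT j) c) (e j c t d)) (e j d (oneT j) d) = e j c t d).
  { intros j c t d. rewrite Hmul by reflexivity. rewrite Hmul by reflexivity.
    destruct (Hmon j) as (_ & H1 & _).
    rewrite (proj1 (H1 t)), (proj2 (H1 t)). reflexivity. }
  assert (Hf : forall L R V, open tS V -> open tS (fun z => V (mulS (mulS L z) R))).
  { intros L R V HV. exact (Hlc L (fun x => V (mulS x R)) (Hrc R V HV)). }
  set (trip := {i : I & (Λ i * Λ i)%type}).
  set (E := fun (p : trip) (s : T (projT1 p)) =>
              e (projT1 p) (fst (projT2 p)) s (snd (projT2 p))).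
  assert (Part1 : forall U : S -> Prop, open tS U -> U zS ->
     exists l : list {i : I & (Λ i * Λ i)%type},
       forall i (a b : Λ i), (exists s : T i, ~ U (e i a s b)) ->
         In (existT (fun k => (Λ k * Λ k)%type) i (a, b)) l).
  { intros U HU HU0. apply NNPP; intro Hno.
    set (bad := fun p : trip => exists s : T (projT1 p), ~ U (E p s)).
    assert (Hex : forall l : list trip, {p : trip | bad p /\ ~ In p l}).
    { intro l. apply constructive_indefinite_description.
      apply NNPP; intro H. apply Hno. exists l. intros i a b Hs.
      apply NNPP; intro Hn. apply H. exists (existT _ i (a,b)). split; [exact Hs|exact Hn]. }
    set (G := fun l => proj1_sig (Hex l)).
    set (L := fun n => nat_rect (fun _ => list trip) nil (fun _ l => G l :: l) n).
    set (t := fun n => G (L n)).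
    assert (HL : forall n k, k < n -> In (t k) (L n)).
    { induction n as [|n IH]; intros k Hk; [lia|].
      simpl. destruct (Nat.eq_dec k n) as [->|Hkn]; [left; reflexivity|].
      right. apply IH. lia. }
    assert (Htin : forall n, ~ In (t n) (L n)).
    { intro n. exact (proj2 (proj2_sig (Hex (L n)))). }
    assert (Htbad : forall n, bad (t n)).
    { intro n. exact (proj1 (proj2_sig (Hex (L n)))). }
    assert (Hinjt : forall m n, t m = t n -> m = n).
    { intros m n Hmn. destruct (lt_eq_lt_dec m n) as [[H|H]|H]; auto.
      - exfalso. apply (Htin n). rewrite <- Hmn. apply HL; exact H.
      - exfalso. apply (Htin m). rewrite Hmn. apply HL; exact H. }
    set (F := fun n (W : S -> Prop) => open tS W /\
       (forall m s, W (E (t m) s) -> ~ U (E (t m) s) -> m <= n)).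
    set (Cov := fun n (x : S) => exists W, F n W /\ W x).
    destruct (Hcc Cov) as [N HN].
    { intro n. apply open_union. intros W HW. exact (proj1 HW). }
    { intros y _. destruct (classic (y = zS)) as [->|Hy].
      - exists 0. exists U. split; [split|exact HU0].
        + exact HU.
        + intros m s H1 H2. contradiction.
      - destruct (Hdec y) as [Hy0|[j [c [t0 [d Hyd]]]]]; [contradiction|].
        destruct (Hhaus y zS Hy) as [V [V' [HV [HV' [Vy [V'z Hdisj]]]]]].
        set (W := fun z => V (mulS (mulS (e j c (oneT j) c) z) (e j d (oneT j) d))).
        assert (HW : forall p s, W (E p s) -> p = existT _ j (c,d)).
        { intros [i [a b]] s HWs. apply (Hkey j c d i a s b).
          intro Heq. unfold W, E in HWs. simpl in HWs. rewrite Heq in HWs.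
          exact (Hdisj zS (conj HWs V'z)). }
        destruct (classic (exists m s, W (E (t m) s) /\ ~ U (E (t m) s)))
          as [[m [s [Hm1 Hm2]]]|Hnone].
        + exists m. exists W. split; [split|].
          * apply Hf; exact HV.
          * intros m' s' H1 H2. assert (t m' = t m) as Heq.
            { rewrite (HW _ _ H1), (HW _ _ Hm1). reflexivity. }
            apply Hinjt in Heq. lia.
          * unfold W. rewrite Hyd, Hsand. rewrite <- Hyd. exact Vy.
        + exists 0. exists W. split; [split|].
          * apply Hf; exact HV.
          * intros m' s' H1 H2. exfalso. apply Hnone. exists m', s'. auto.
          * unfold W. rewrite Hyd, Hsand. rewrite <- Hyd. exact Vy. }
    destruct (Htbad (Nat.succ N)) as [s Hs].
    destruct (HN (E (t (Nat.succ N)) s) Logic.I) as [n [Hn [W [[_ HW] HWx]]]].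
    pose proof (HW _ _ HWx Hs) as Hc. exact (Nat.nle_succ_diag_l N (Nat.le_trans _ _ _ Hc Hn)). }
  split; [exact Part1|].
  intros i Un HUn Hcov.
  destruct (Hcov zS (or_introl eq_refl)) as [n0 Hn0].
  destruct (Part1 (Un n0) (HUn n0) Hn0) as [l Hl].
  set (g := fun (p : trip) y => mulS (mulS (e (projT1 p) (fst (projT2 p)) (oneT _) (fst (projT2 p))) y)
                  (e (projT1 p) (snd (projT2 p)) (oneT _) (snd (projT2 p)))).
  set (covp := fun p => forall y, exists n, Un n (g p y)).
  assert (HN : forall l' : list trip, exists N, n0 <= N /\
     forall p, In p l' -> covp p -> forall y, exists n, n <= N /\ Un n (g p y)).
  { induction l' as [|p l' IH].
    - exists n0. split; [lia|]. intros p [].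
    - destruct IH as [N [HN1 HN2]].
      destruct (classic (covp p)) as [Hp|Hp].
      + destruct (Hcc (fun n y => Un n (g p y))) as [N' HN'].
        { intro n. apply Hf. apply HUn. }
        { intros y _. apply Hp. }
        exists (N + N'). split; [lia|].
        intros q [<-|Hq] Hcq y.
        * destruct (HN' y Logic.I) as [n [? ?]]. exists n. split; [lia|assumption].
        * destruct (HN2 q Hq Hcq y) as [n [? ?]]. exists n. split; [lia|assumption].
      + exists N. split; [exact HN1|].
        intros q [<-|Hq] Hcq y; [contradiction|]. apply HN2; assumption. }
  destruct (HN l) as [N [HN1 HN2]].
  exists N. intros x Hx.
  destruct Hx as [->|[a [s [b ->]]]].
  - exists n0. split; [exact HN1|exact Hn0].
  - destruct (classic (Un n0 (e i a s b))) as [Hin|Hout].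
    + exists n0. split; [exact HN1|exact Hin].
    + pose proof (Hl i a b (ex_intro _ s Hout)) as Hinl.
      assert (Hc : covp (existT _ i (a,b))).
      { intro y. apply Hcov. unfold g; simpl.
        destruct (Hdec y) as [->|[k [c [t [d ->]]]]].
        - left. rewrite (proj2 (Hz _)), (proj1 (Hz _)). reflexivity.
        - destruct (classic (k = i)) as [<-|Hki].
          + destruct (classic (a = c)) as [<-|Hac].
            * rewrite Hmul by reflexivity.
              destruct (classic (d = b)) as [<-|Hdb].
              -- rewrite Hmul by reflexivity. right. eauto.
              -- left. rewrite Hmul0 by assumption. reflexivity.
            * left. rewrite Hmul0 by assumption. apply Hz.
          + left. rewrite Hmulij by (intro Heq; apply Hki; symmetry; exact Heq).
            apply Hz. }
      destruct (HN2 _ Hinl Hc (e i a s b)) as [n [Hn1 Hn2]].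
      exists n. split; [exact Hn1|]. unfold g in Hn2; simpl in Hn2.
      rewrite Hsand in Hn2. exact Hn2.
Qed.
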